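(* Let $p$ be a prime, $n,m\ge1$ integers with $p>n+m+2$, $q$ a power of $p$, and let $\mathrm{res}_{n,m}\in\mathbb{F}_q[a_0,\dots,a_n,b_0,\dots,b_m]$ be the generic resultant of $f=\sum_{0\le i\le n}a_ix^i$ and $g=\sum_{0\le i\le m}b_ix^i$. Then there is no nonzero $u\in\mathbb{F}_q^{n+m+2}$ such that $\mathrm{res}_{n,m}$ shifted by $u$ equals $\mathrm{res}_{n,m}$; i.e. $\mathrm{res}_{n,m}$ is not shift-invariant.
   Context: The generic resultant $\mathrm{res}_{n,m}$ is the determinant of the $(n+m)\times(n+m)$ Sylvester matrix of $f$ and $g$ with indeterminate coefficients $a_0,\dots,a_n,b_0,\dots,b_m$. A polynomial $F$ in $N$ variables $z$ shifted by $u\in\mathbb{F}_q^N$ is $F(z-u)$. *)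

(* Defs.v *)
From HB Require Import structures.
From mathcomp Require Import all_boot all_order all_algebra all_field.
Set Implicit Arguments. Unset Strict Implicit. Unset Printing Implicit Defensive.
Import Order.TTheory GRing.Theory Num.Theory.
Local Open Scope ring_scope.

(* Multivariate polynomials in k variables z_0,...,z_{k-1} over R, encoded as
   iterated univariate polynomials: mpoly R (k+1) = {poly mpoly R k}; the
   outermost indeterminate 'X of mpoly R (k+1) is the variable z_k. *)
Fixpoint mpoly (R : comNzRingType) (k : nat) : comNzRingType :=
  if k is k'.+1 then ({poly mpoly R k'} : comNzRingType) else R.

Fixpoint mcst (R : comNzRingType) (k : nat) : R -> mpoly R k :=
  match k return R -> mpoly R k with
  | k'.+1 => fun c => ((@mcst R k' c)%:P : {poly mpoly R k'})
  | 0 => fun c => c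
  end.

(* the variable z_i (zero if i >= k) *)
Fixpoint mvar (R : comNzRingType) (k : nat) (i : nat) : mpoly R k :=
  match k return mpoly R k with
  | k'.+1 => (if i == k' then 'X else (@mvar R k' i)%:P : {poly mpoly R k'})
  | 0 => 0
  end.

(* shift: F(z) |-> F(z - u), the substitution z_i := z_i - u_i for all i < k *)
Fixpoint mshift (R : comNzRingType) (k : nat) (u : nat -> R) : mpoly R k -> mpoly R k :=
  match k return mpoly R k -> mpoly R k with
  | k'.+1 => fun F : {poly mpoly R k'} =>
      ((map_poly (@mshift R k' u) F) \Po ('X - (@mcst R k' (u k'))%:P)
        : {poly mpoly R k'})
  | 0 => fun F => F
  end.

Definition ext_vec (R : comNzRingType) (N : nat) (u : 'I_N -> R) : nat -> R :=
  fun i => if insub i is Some j then u j else 0.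

(* Generic resultant res_{n,m} in F[a_0..a_n,b_0..b_m], with variables
   a_i = z_i (0 <= i <= n) and b_j = z_{n+1+j} (0 <= j <= m), N = n+m+2. *)
Definition gen_f (R : comNzRingType) (n m : nat) : {poly mpoly R (n + m + 2)} :=
  \poly_(i < n.+1) @mvar R (n + m + 2) i.
Definition gen_g (R : comNzRingType) (n m : nat) : {poly mpoly R (n + m + 2)} :=
  \poly_(j < m.+1) @mvar R (n + m + 2) (n.+1 + j).
Definition gen_res (R : comNzRingType) (n m : nat) : mpoly R (n + m + 2) :=
  resultant (gen_f R n m) (gen_g R n m).

(* Main.v *)
Require Import Defs.
From HB Require Import structures.
From mathcomp Require Import all_boot all_order all_algebra all_field.
Import GRing.Theory.
Local Open Scope ring_scope.
From mathcomp Require Import zify.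

Fixpoint meval (R : comNzRingType) (k : nat) (z : nat -> R) : {rmorphism mpoly R k -> R} :=
  match k return {rmorphism mpoly R k -> R} with
  | k'.+1 => (horner_eval (z k') \o map_poly (meval R k' z) : {rmorphism {poly mpoly R k'} -> R})
  | 0 => idfun
  end.

Lemma meval_cst (R : comNzRingType) k z (c : R) : meval R k z (mcst k c) = c.
Proof. elim: k => [//|k IH] /=. rewrite /horner_eval map_polyC hornerC; exact: IH. Qed.

Lemma meval_var (R : comNzRingType) k z i : meval R k z (mvar R k i) = if (i < k)%N then z i else 0.
Proof.
elim: k => [//|k IH] /=; rewrite /horner_eval.
case: eqP => [->|ne]; first by rewrite map_polyX hornerX ltnSn.
rewrite map_polyC hornerC ltnS leq_eqVlt; move: (IH); rewrite /= => ->. by case: eqP.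
Qed.

Lemma meval_shift (R : comNzRingType) k z u (P : mpoly R k) :
  meval R k z (mshift u P) = meval R k (fun i => z i - u i) P.
Proof.
elim: k P => [//|k IH] P /=; rewrite /horner_eval.
rewrite map_comp_poly horner_comp -map_poly_comp.
rewrite rmorphB /= map_polyX map_polyC /= meval_cst !hornerE.
congr (_.[_]); apply: eq_map_poly => x /=; exact: IH.
Qed.
Definition Syl (R : nzRingType) (dp dq : nat) (p q : {poly R}) : 'M[R]_(dq + dp) :=
  \matrix_(i, j) match split i with
                 | inl k => p`_(j - k) *+ (k <= j)%N
                 | inr k => q`_(j - k) *+ (k <= j)%N end.
Arguments Syl {R}.

Lemma map_Syl (A B : nzRingType) (f : {rmorphism A -> B}) (p q : {poly A}) :
  map_mx f (Sylvester_mx p q) = Syl (size p).-1 (size q).-1 (map_poly f p) (map_poly f q).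
Proof.
apply/matrixP => i j; rewrite [LHS]mxE Sylvester_mxE mxE.
by case: split => k; rewrite rmorphMn coef_map.
Qed.

Lemma Syl_root (F : fieldType) dp dq (p q : {poly F}) r :
  (size p <= dp.+1)%N -> (size q <= dq.+1)%N -> root p r -> root q r ->
  (0 < dq + dp)%N -> \det (Syl dp dq p q) = 0.
Proof.
move=> sp sq /eqP pr /eqP qr N0.
pose c : 'cV[F]_(dq + dp) := \col_j (r ^+ j).
have Hc : Syl dp dq p q *m c = 0.
  apply/matrixP => i j0; rewrite !mxE.
  have key : forall (s : {poly F}) k, (size s + k <= dq + dp)%N -> s.[r] = 0 ->
      \sum_(j < dq + dp) (s`_(j - k) *+ (k <= j)%N) * r ^+ j = 0.
    move=> s k sz sr.
    have -> : \sum_(j < dq + dp) (s`_(j - k) *+ (k <= j)%N) * r ^+ j = (s * 'X^k).[r].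
      rewrite (@horner_coef_wide _ (dq + dp)); last first.
        apply: leq_trans (size_polyMleq _ _) _; rewrite size_polyXn addnS /=; exact: sz.
      apply: eq_bigr => j _; rewrite coefMXn ltnNge; by case: (k <= j)%N; rewrite ?mulr0n ?mulr1n.
    by rewrite hornerM sr mul0r.
  under eq_bigr => j _ do rewrite !mxE.
  case: (split i) => k; apply: key.
  - have := ltn_ord k; lia.
  - exact: pr.
  - have := ltn_ord k; lia.
  - exact: qr.
apply/eqP; rewrite -det_tr; apply/det0P; exists c^T.
  apply/eqP => /matrixP /(_ 0 (Ordinal N0)); rewrite !mxE /= expr0 => /eqP.
  by rewrite oner_eq0.
by rewrite -trmx_mul Hc trmx0.
Qed.

Lemma Syl_upper (F : fieldType) dp dq (p q : {poly F}) :
  (forall j, (j < dq)%N -> q`_j = 0) -> p`_0 != 0 -> q`_dq != 0 ->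
  \det (Syl dp dq p q) != 0.
Proof.
move=> ql p0 qd; rewrite -det_tr det_trig.
  apply/prodf_neq0 => i _; rewrite !mxE.
  case: (splitP i) => k hk; rewrite hk; [by rewrite leqnn subnn mulr1n | by rewrite addnK leq_addl mulr1n].
apply/is_trig_mxP => i j ij; rewrite !mxE.
case: (splitP j) => k hk; rewrite hk in ij.
  by rewrite leqNgt ij mulr0n.
case: leqP => kl; last by rewrite mulr0n.
rewrite mulr1n ql //; lia.
Qed.

Lemma Syl_lower (F : fieldType) dp dq (p q : {poly F}) :
  (forall j, (0 < j)%N -> p`_j = 0) -> (size q <= dq.+1)%N -> p`_0 != 0 -> q`_dq != 0 ->
  \det (Syl dp dq p q) != 0.
Proof.
move=> pl sq p0 qd; rewrite det_trig.
  apply/prodf_neq0 => i _; rewrite !mxE.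
  case: (splitP i) => k hk; rewrite hk; [by rewrite leqnn subnn mulr1n | by rewrite addnK leq_addl mulr1n].
apply/is_trig_mxP => i j ij; rewrite !mxE.
case: (splitP i) => k hk; rewrite hk in ij.
  by rewrite ltnW // mulr1n pl // subn_gt0.
have kj : (k <= j)%N by lia.
rewrite kj mulr1n nth_default //; apply: (leq_trans sq); lia.
Qed.

Lemma nonroot (F : fieldType) (p d : nat) (s : {poly F}) :
  p \in [pchar F] -> (d.+1 < p)%N -> s != 0 -> (size s <= d.+1)%N ->
  exists r, r != 0 /\ s.[r] != 0.
Proof.
move=> hc dp s0 ss.
pose rs := [seq (i.+1)%:R : F | i <- iota 0 d.+1].
have nz : forall i, (i < d.+1)%N -> (i.+1)%:R != 0 :> F.
  move=> i hi; rewrite -(dvdn_pcharf hc); apply/negP => /dvdn_leq; lia.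
case: (boolP (has (fun r => s.[r] != 0) rs)) => [/hasP [r /mapP [i hi ->] sr] | /hasPn H].
  by exists (i.+1)%:R; split => //; apply: nz; rewrite mem_iota in hi.
have : (size rs < size s)%N.
  apply: max_poly_roots => //.
    by apply/allP => r /H; rewrite negbK.
  rewrite map_inj_in_uniq ?iota_uniq // => i j; rewrite !mem_iota /= => hi hj eij.
  apply/eqP; apply/negP => nij.
  wlog lij : i j hi hj eij nij / (i < j)%N.
    move=> W; case: (ltngtP i j) => [l|l|l]; first exact: (W i j).
    - by apply: (W j i) => //; rewrite eq_sym.
    - by rewrite l eqxx in nij.
  have : ((j.+1 - i.+1)%:R : F) == 0.
    by rewrite natrB; [rewrite eij subrr | rewrite ltnS ltnW].
  rewrite -(dvdn_pcharf hc) => /dvdn_leq; lia.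
rewrite size_map size_iota; lia.
Qed.

Section Main.
Variables (F : fieldType) (n m : nat).
Definition fz (z : nat -> F) : {poly F} := \poly_(i < n.+1) z i.
Definition gz (z : nat -> F) : {poly F} := \poly_(j < m.+1) z (n.+1 + j)%N.

Lemma mvar_neq0 k i : (i < k)%N -> mvar F k i != 0.
Proof.
move=> ik; apply/eqP => h.
have e := meval_var F k (fun _ => 1) i; rewrite ik h rmorph0 in e.
by move/eqP: e; rewrite eq_sym oner_eq0.
Qed.

Lemma eval_res z : meval F (n + m + 2) z (gen_res F n m) = \det (Syl n m (fz z) (gz z)).
Proof.
rewrite /gen_res /resultant -det_map_mx map_Syl.
have -> : size (gen_f F n m) = n.+1 by rewrite /gen_f size_poly_eq // mvar_neq0 //; lia.
have -> : size (gen_g F n m) = m.+1 by rewrite /gen_g size_poly_eq // mvar_neq0 //; lia.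
congr (\det (Syl _ _ _ _)); apply/polyP => i; rewrite coef_map !coef_poly;
  case: ifP => h; rewrite ?raddf0 //.
  transitivity (if (i < n + m + 2)%N then z i else 0); first exact (meval_var F (n + m + 2) z i).
  rewrite ifT //; lia.
transitivity (if (n.+1 + i < n + m + 2)%N then z (n.+1 + i)%N else 0); first exact (meval_var F (n + m + 2) z (n.+1 + i)).
rewrite ifT //; lia.
Qed.
End Main.

Theorem mainTheorem18 (F : finFieldType) (p n m : nat)
  (hp : prime p) (hchar : p \in [pchar F])
  (hn : (1 <= n)%N) (hm : (1 <= m)%N) (hpnm : (n + m + 2 < p)%N)
  (u : 'I_(n + m + 2) -> F) (hu : exists i, u i != 0) :
  mshift (ext_vec u) (gen_res F n m) != gen_res F n m.
Proof.
apply/negP => /eqP H.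
set e := ext_vec u.
have per : forall z, meval F (n + m + 2) z (gen_res F n m) =
                     meval F (n + m + 2) (fun i => z i - e i) (gen_res F n m).
  move=> z; rewrite -{1}H; exact (meval_shift F (n + m + 2) z e (gen_res F n m)).
set phi := fz F n e; set psi := gz F n m e.
have sphi : (size phi <= n.+1)%N := size_poly _ _.
have spsi : (size psi <= m.+1)%N := size_poly _ _.
have HP : forall p0 q0 : {poly F}, (size p0 <= n.+1)%N -> (size q0 <= m.+1)%N ->
    \det (Syl n m (p0 + phi) (q0 + psi)) = \det (Syl n m p0 q0).
  move=> p0 q0 sp sq.
  pose z := fun i => if (i < n.+1)%N then (p0 + phi)`_i else (q0 + psi)`_(i - n.+1).
  have E := per z; rewrite !eval_res in E.
  have E1 : fz F n z = p0 + phi.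
    apply/polyP => i; rewrite /fz coef_poly /z; case: ifP => h; rewrite ?h //.
    have hi : (n.+1 <= i)%N by rewrite leqNgt h.
    by rewrite nth_default //; apply: leq_trans (size_polyD _ _) _; rewrite geq_max (leq_trans sp) ?(leq_trans sphi).
  have E2 : gz F n m z = q0 + psi.
    apply/polyP => j; rewrite /gz coef_poly /z; case: ifP => h.
      by rewrite ifF ?addKn //; apply/negbTE; rewrite -leqNgt leq_addr.
    have hi : (m.+1 <= j)%N by rewrite leqNgt h.
    by rewrite nth_default //; apply: leq_trans (size_polyD _ _) _; rewrite geq_max (leq_trans sq) ?(leq_trans spsi).
  have E3 : fz F n (fun i => z i - e i) = p0.
    apply/polyP => i; rewrite /fz coef_poly /z; case: ifP => h.
      by rewrite h coefD /phi /fz coef_poly h addrK.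
    by rewrite nth_default // (leq_trans sp) // leqNgt h.
  have E4 : gz F n m (fun i => z i - e i) = q0.
    apply/polyP => j; rewrite /gz coef_poly /z; case: ifP => h.
      rewrite ifF; last by apply/negbTE; rewrite -leqNgt leq_addr.
      by rewrite addKn coefD /psi /gz coef_poly h addrK.
    by rewrite nth_default // (leq_trans sq) // leqNgt h.
  by rewrite -E1 -E2 E -E3 -E4.
have N0 : (0 < m + n)%N by lia.
have coefphi : forall i, phi`_i = if (i < n.+1)%N then e i else 0 by move=> i; rewrite coef_poly.
have coefpsi : forall j, psi`_j = if (j < m.+1)%N then e (n.+1 + j)%N else 0 by move=> j; rewrite coef_poly.
have [psi0|psiN] := eqVneq psi 0.
- have phiN : phi != 0.
    apply/eqP => phi0; case: hu => i ui.
    have ei : e i = u i by rewrite /e /ext_vec valK.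
    case: (ltnP i n.+1) => hi.
      by move: (coefphi i); rewrite phi0 coef0 hi ei => /esym/eqP; rewrite (negbTE ui).
    have := coefpsi (i - n.+1)%N; rewrite psi0 coef0 ifT; last by have := ltn_ord i; lia.
    by rewrite subnKC // ei => /esym/eqP; rewrite (negbTE ui).
  have [r [_ pr]] := nonroot F p n phi hchar ltac:(lia) phiN sphi.
  set a := phi.[r].
  pose q' : {poly F} := 'X^m - (r ^+ m)%:P.
  have sq' : (size q' <= m.+1)%N.
    rewrite /q'; apply: leq_trans (size_polyD _ _) _; rewrite geq_max size_polyXn leqnn size_polyN size_polyC /=; by case: (_ != 0).
  have sp' : (size (a%:P - phi)%R <= n.+1)%N.
    apply: leq_trans (size_polyD _ _) _; rewrite geq_max size_polyN sphi size_polyC andbT; by case: (_ != 0).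
  have := HP (a%:P - phi) q' sp' sq'.
  rewrite psi0 addr0 subrK (Syl_root F n m (a%:P - phi) q' r) //.
  + move=> /eqP; apply/negP; apply: Syl_lower.
    * by move=> j j0; rewrite coefC gtn_eqF.
    * exact: sq'.
    * by rewrite coefC.
    * by rewrite /q' coefB coefXn coefC eqxx gtn_eqF // subr0 oner_neq0.
  + by rewrite /root hornerD hornerN hornerC subrr.
  + by rewrite /root /q' hornerD hornerN hornerC hornerXn subrr.
- have [r [r0 pr]] := nonroot F p m psi hchar ltac:(lia) psiN spsi.
  have rm0 : r ^+ m != 0 by rewrite expf_neq0.
  set b := psi.[r] / r ^+ m; set c := (phi.[r] - 1) / r.
  pose p' : {poly F} := 1 + c *: 'X.
  pose q' : {poly F} := b *: 'X^m.
  have sp' : (size (p' - phi)%R <= n.+1)%N.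
    apply/leq_sizeP => j hj; rewrite coefB coefD coef1 coefZ coefX coefphi ltnNge hj /=.
    have -> : (j == 0%N) = false by apply/negbTE; lia.
    have -> : (j == 1%N) = false by apply/negbTE; lia.
    by rewrite mulr0 addr0 subr0.
  have sq' : (size (q' - psi)%R <= m.+1)%N.
    apply/leq_sizeP => j hj; rewrite coefB coefZ coefXn coefpsi ltnNge hj /=.
    have -> : (j == m) = false by apply/negbTE; lia.
    by rewrite mulr0 subr0.
  have := HP (p' - phi) (q' - psi) sp' sq'.
  rewrite !subrK (Syl_root F n m (p' - phi) (q' - psi) r) //.
  + move=> /eqP; apply/negP; apply: Syl_upper.
    * by move=> j jm; rewrite /q' coefZ coefXn ltn_eqF // mulr0.
    * by rewrite /p' coefD coef1 coefZ coefX /= mulr0 addr0 oner_neq0.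
    * by rewrite /q' coefZ coefXn eqxx mulr1 mulf_neq0 ?invr_eq0.
  + rewrite /root /p' !hornerE /c divfK // addrCA subrr addr0 subrr.
    by [].
  + rewrite /root /q' !hornerE /b divfK //.
    by rewrite subrr.
Qed.
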